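(* Let $\mathcal H$ be a graded connected Hopf algebra over a field $\Bbbk$ and let $\varphi,\varphi',\psi,\psi'$ be characters on $\mathcal H$. Suppose that either $\psi^{-1}\varphi=(\psi')^{-1}\varphi'$ or $\varphi\psi^{-1}=\varphi'(\psi')^{-1}$. Then $S(\varphi,\psi)=S(\varphi',\psi')$ and $I(\varphi,\psi)=I(\varphi',\psi')$.
   Context: $\mathcal H=\bigoplus_{n\ge0}\mathcal H_n$ is graded connected with finite-dimensional components; characters are algebra morphisms to $\Bbbk$, multiplied by convolution $\varphi\psi=m_\Bbbk\circ(\varphi\otimes\psi)\circ\Delta$, with inverse $\varphi^{-1}=\varphi\circ S$. For a linear functional $\varphi$, $\varphi_n=\varphi|_{\mathcal H_n}$. $S(\varphi,\psi)$ is the largest graded subcoalgebra of $\mathcal H$ on which $\varphi=\psi$; $I(\varphi,\psi)$ is the ideal of the graded dual $\mathcal H^*=\bigoplus_n(\mathcal H_n)^*$ generated by $\varphi_n-\psi_n$, $n\ge0$. *)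

(* Defs.v *)
(* A graded connected Hopf algebra H over a field K with
   finite-dimensional homogeneous components is encoded by a homogeneous
   basis and its structure constants. *)
From HB Require Import structures.
From mathcomp Require Import all_boot all_order all_algebra.
Set Implicit Arguments. Unset Strict Implicit. Unset Printing Implicit Defensive.
Import Order.TTheory GRing.Theory.
Local Open Scope ring_scope.

Definition hbasis (d : nat -> nat) := {n : nat & 'I_(d n)}.

Record gcHopf (K : fieldType) := GcHopf {
  hdim : nat -> nat;
  hone : 'I_(hdim 0);                      (* the basis element 1 of H_0 *)
  hmul : hbasis hdim -> hbasis hdim -> hbasis hdim -> K;
      (* hmul a b e = coefficient of e in a*b  (deg e = deg a + deg b) *)
  hcomul : hbasis hdim -> hbasis hdim -> hbasis hdim -> K;
      (* hcomul e a b = coefficient of a (x) b in Delta(e)  (deg a + deg b = deg e) *)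
  hanti : hbasis hdim -> hbasis hdim -> K
      (* hanti a a' = coefficient of a' in S(a)  (deg a' = deg a) *)
}.

Section Hopf.
Variables (K : fieldType) (H : gcHopf K).

Definition hB := hbasis (hdim H).
Definition bas (n : nat) (i : 'I_(hdim H n)) : hB := existT (fun m => 'I_(hdim H m)) n i.
Definition deg (b : hB) : nat := projT1 b.
Definition one : hB := bas (@hone K H).
Definition sdeg (n : nat) (F : hB -> K) : K := \sum_(i < hdim H n) F (bas i).

Definition mul := @hmul K H.
Definition comul := @hcomul K H.
Definition anti := @hanti K H.

Definition eps (b : hB) : K := (deg b == 0)%:R.

Definition gcHopf_axioms : Prop :=
  hdim H 0 = 1%N /\
  [/\ (* associativity *)
      forall a b c f, deg f = (deg a + deg b + deg c)%N ->
        sdeg (deg a + deg b) (fun e => mul a b e * mul e c f)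
        = sdeg (deg b + deg c) (fun e => mul b c e * mul a e f),
      forall a e, deg e = deg a ->
        mul one a e = (a == e)%:R /\ mul a one e = (a == e)%:R,
      (* coassociativity *)
      forall e a b c, (deg a + deg b + deg c)%N = deg e ->
        sdeg (deg a + deg b) (fun x => comul e x c * comul x a b)
        = sdeg (deg b + deg c) (fun x => comul e a x * comul x b c),
      (* counit *)
      forall e b, deg b = deg e ->
        sdeg 0 (fun x => eps x * comul e x b) = (b == e)%:R /\
        sdeg 0 (fun x => comul e b x * eps x) = (b == e)%:R &
      [/\ (* Delta is an algebra morphism *)
      comul one one one = 1,
      forall a b x y, (deg x + deg y)%N = (deg a + deg b)%N ->
        sdeg (deg a + deg b) (fun e => mul a b e * comul e x y)
        = \sum_(p < (deg a).+1) \sum_(q < (deg b).+1 | (p + q == deg x)%N)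
            sdeg p (fun a1 => sdeg (deg a - p) (fun a2 =>
            sdeg q (fun b1 => sdeg (deg b - q) (fun b2 =>
              comul a a1 a2 * comul b b1 b2 * mul a1 b1 x * mul a2 b2 y)))),
      (* antipode: m (S (x) id) Delta = eta eps *)
      forall e f, deg f = deg e ->
        \sum_(p < (deg e).+1) sdeg p (fun a => sdeg (deg e - p) (fun b =>
           comul e a b * sdeg p (fun a' => anti a a' * mul a' b f)))
        = eps e * (f == one)%:R &
      (* antipode: m (id (x) S) Delta = eta eps *)
      forall e f, deg f = deg e ->
        \sum_(p < (deg e).+1) sdeg p (fun a => sdeg (deg e - p) (fun b =>
           comul e a b * sdeg (deg e - p) (fun b' => anti b b' * mul a b' f)))
        = eps e * (f == one)%:R ]].

(* Linear functionals on H are given by their values on the basis. *)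
Definition functional := hB -> K.

Definition character (phi : functional) : Prop :=
  phi one = 1 /\
  forall a b, sdeg (deg a + deg b) (fun e => mul a b e * phi e) = phi a * phi b.

(* convolution  phi psi = m_K o (phi (x) psi) o Delta *)
Definition conv (phi psi : functional) : functional := fun e =>
  \sum_(p < (deg e).+1) sdeg p (fun a => sdeg (deg e - p) (fun b =>
     comul e a b * (phi a * psi b))).

(* phi^{-1} = phi o S *)
Definition cinv (phi : functional) : functional := fun e =>
  sdeg (deg e) (fun a => anti e a * phi a).

Definition gsubspace := forall n, {vspace 'rV[K]_(hdim H n)}.

(* value of a functional at the element sum_i v_i b_(n,i) of H_n *)
Definition fval (phi : functional) (n : nat) (v : 'rV[K]_(hdim H n)) : K :=
  \sum_(i < hdim H n) v 0 i * phi (bas i).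

(* the H_p (x) H_(n-p) component of Delta(v), v in H_n, as a matrix *)
Definition comulmx (n p : nat) (v : 'rV[K]_(hdim H n))
  : 'M[K]_(hdim H p, hdim H (n - p)) :=
  \matrix_(i, j) \sum_(k < hdim H n) v 0 k * comul (bas k) (bas i) (bas j).

(* M lies in U (x) V  (tensors of 'rV_m1 (x) 'rV_m2 represented as matrices) *)
Definition in_tensor (m1 m2 : nat) (U : {vspace 'rV[K]_m1})
  (V : {vspace 'rV[K]_m2}) (M : 'M[K]_(m1, m2)) : Prop :=
  exists r (X : 'M[K]_(r, m1)) (Y : 'M[K]_(r, m2)),
    [/\ forall k, row k X \in U, forall k, row k Y \in V & M = X^T *m Y].

Definition graded_subcoalgebra (C : gsubspace) : Prop :=
  forall n (v : 'rV[K]_(hdim H n)), v \in C n ->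
    forall p, (p <= n)%N -> in_tensor (C p) (C (n - p)%N) (@comulmx n p v).

Definition agree_on (phi psi : functional) (C : gsubspace) : Prop :=
  graded_subcoalgebra C /\
  forall n (v : 'rV[K]_(hdim H n)), v \in C n -> fval phi v = fval psi v.

(* C is S(phi,psi): the largest graded subcoalgebra on which phi = psi *)
Definition is_S (phi psi : functional) (C : gsubspace) : Prop :=
  agree_on phi psi C /\
  forall C', agree_on phi psi C' -> forall n, (C' n <= C n)%VS.

Definition in_graded_dual (f : functional) : Prop :=
  exists N, forall b, (N <= deg b)%N -> f b = 0.

Definition restr (n : nat) (phi : functional) : functional :=
  fun b => if deg b == n then phi b else 0.

Definition is_ideal (J : functional -> Prop) : Prop :=
  [/\ forall f, J f -> in_graded_dual f,
      J (fun _ => 0),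
      forall f g, J f -> J g -> J (fun b => f b + g b),
      forall (c : K) f, J f -> J (fun b => c * f b) &
      forall f g, in_graded_dual g -> J f -> J (conv g f) /\ J (conv f g)].

(* membership in the ideal of H^* generated by the phi_n - psi_n *)
Definition in_I (phi psi : functional) (f : functional) : Prop :=
  forall J, is_ideal J ->
    (forall n, J (fun b => restr n phi b - restr n psi b)) -> J f.

End Hopf.

(* Main.v *)
Require Import Defs.
From HB Require Import structures.
From mathcomp Require Import all_boot all_order all_algebra.
From mathcomp Require Import ring zify.
From Stdlib Require Import FunctionalExtensionality ClassicalEpsilon.
Set Implicit Arguments. Unset Strict Implicit. Unset Printing Implicit Defensive.
Import Order.TTheory GRing.Theory.
Local Open Scope ring_scope.

Section Idx.
Variable K : fieldType.

Lemma sum_pick N (G : nat -> K) j :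
  \sum_(r < N.+1) (r == j :> nat)%:R * G r = if (j < N.+1)%N then G j else 0.
Proof.
transitivity (\sum_(r < N.+1 | r == j :> nat) G r); last exact: big_ord1_eq.
rewrite [RHS]big_mkcond; apply: eq_bigr => r _.
by case: eqP => _; rewrite ?mul1r ?mul0r.
Qed.

Lemma idx1 N (F : nat -> nat -> nat -> nat -> K) :
  \sum_(p < N.+1) \sum_(s < N.+1) ((p + s)%N == N)%:R *
     \sum_(q < N.+1) \sum_(r < N.+1) ((q + r)%N == p)%:R * F p q r s
  = \sum_(q < N.+1) \sum_(r < N.+1) \sum_(s < N.+1) ((q + r + s)%N == N)%:R * F (q + r)%N q r s.
Proof.
transitivity (\sum_(p < N.+1) \sum_(s < N.+1) \sum_(q < N.+1) \sum_(r < N.+1)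
   (p == (q + r)%N :> nat)%:R * (((p + s)%N == N)%:R * F p q r s)).
  apply: eq_bigr => p _; apply: eq_bigr => s _; rewrite mulr_sumr; apply: eq_bigr => q _.
  rewrite mulr_sumr; apply: eq_bigr => r _; rewrite (eq_sym (nat_of_ord p)); ring.
rewrite exchange_big /=.
transitivity (\sum_(s < N.+1) \sum_(q < N.+1) \sum_(r < N.+1) \sum_(p < N.+1)
   (p == (q + r)%N :> nat)%:R * (((p + s)%N == N)%:R * F p q r s)).
  apply: eq_bigr => s _; rewrite exchange_big; apply: eq_bigr => q _.
  by rewrite exchange_big.
transitivity (\sum_(s < N.+1) \sum_(q < N.+1) \sum_(r < N.+1)
   (((q + r + s)%N == N)%:R * F (q + r)%N q r s)).
  apply: eq_bigr => s _; apply: eq_bigr => q _; apply: eq_bigr => r _.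
  rewrite (sum_pick _ (fun p => ((p + s)%N == N)%:R * F p q r s)).
  case: ifP => // h; apply/esym; case: eqP; rewrite ?mul0r // => e.
  by move: h e; lia.
rewrite exchange_big; apply: eq_bigr => q _; rewrite exchange_big; done.
Qed.

Lemma idx2 N (F : nat -> nat -> nat -> nat -> K) :
  \sum_(q < N.+1) \sum_(t < N.+1) ((q + t)%N == N)%:R *
     \sum_(r < N.+1) \sum_(s < N.+1) ((r + s)%N == t)%:R * F q t r s
  = \sum_(q < N.+1) \sum_(r < N.+1) \sum_(s < N.+1) ((q + r + s)%N == N)%:R * F q (r + s)%N r s.
Proof.
apply: eq_bigr => q _.
transitivity (\sum_(t < N.+1) \sum_(r < N.+1) \sum_(s < N.+1)
   (t == (r + s)%N :> nat)%:R * (((q + t)%N == N)%:R * F q t r s)).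
  apply: eq_bigr => t _; rewrite mulr_sumr; apply: eq_bigr => r _.
  rewrite mulr_sumr; apply: eq_bigr => s _; rewrite (eq_sym (nat_of_ord t)); ring.
rewrite exchange_big; apply: eq_bigr => r _; rewrite exchange_big; apply: eq_bigr => s _.
rewrite (sum_pick _ (fun t => ((q + t)%N == N)%:R * F q t r s)) addnA.
case: ifP => // h; apply/esym; case: eqP; rewrite ?mul0r // => e.
by move: h e; lia.
Qed.
End Idx.

Section Basic.
Variables (K : fieldType) (H : gcHopf K).

Definition ep : functional H := @eps K H.

Lemma bas_eq n (i j : 'I_(hdim H n)) : (bas j == bas i) = (j == i).
Proof. by rewrite /bas eq_Tagged. Qed.

Lemma hB_ind (P : hB H -> Prop) : (forall n (i : 'I_(hdim H n)), P (bas i)) -> forall e, P e.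
Proof. by move=> h [n i]; exact: h. Qed.

Lemma sdeg_delta n (i : 'I_(hdim H n)) (F : hB H -> K) :
  sdeg n (fun b => F b * (b == bas i)%:R) = F (bas i).
Proof.
rewrite /sdeg (bigD1 i) //= bas_eq eqxx mulr1 big1 ?addr0 // => j /negbTE.
by rewrite bas_eq => ->; rewrite mulr0.
Qed.

Lemma sdeg_delta' n (i : 'I_(hdim H n)) (F : hB H -> K) :
  sdeg n (fun b => (b == bas i)%:R * F b) = F (bas i).
Proof.
rewrite -[RHS](sdeg_delta i); apply: eq_bigr => j _; exact: mulrC.
Qed.

Lemma sdeg_exch p q (F : hB H -> hB H -> K) :
  sdeg p (fun a => sdeg q (fun b => F a b)) = sdeg q (fun b => sdeg p (fun a => F a b)).
Proof. exact: exchange_big. Qed.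

Lemma sdeg_mulr p (F : hB H -> K) c : sdeg p F * c = sdeg p (fun a => F a * c).
Proof. by rewrite /sdeg mulr_suml. Qed.

Lemma sdeg_mull p (F : hB H -> K) c : c * sdeg p F = sdeg p (fun a => c * F a).
Proof. by rewrite /sdeg mulr_sumr. Qed.

Lemma sdeg0 p : sdeg p (fun _ : hB H => 0) = 0 :> K.
Proof. exact: big1. Qed.

Lemma sdeg_eq p (F G : hB H -> K) :
  (forall i : 'I_(hdim H p), F (bas i) = G (bas i)) -> sdeg p F = sdeg p G.
Proof. by move=> h; apply: eq_bigr => i _. Qed.

Hypothesis HH : gcHopf_axioms H.

Lemma conv_epl (f : functional H) : conv ep f = f.
Proof.
apply: functional_extensionality; apply: hB_ind => n i.
case: HH => _ [_ _ _ Hcu _].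
rewrite /conv big_ord_recl big1 ?addr0; last first.
  move=> p _; apply: big1 => j _; apply: big1 => k _.
  by rewrite /ep /eps /= mul0r mulr0.
rewrite /= subn0 sdeg_exch -[RHS](sdeg_delta' i f); apply: sdeg_eq => j.
rewrite -(proj1 (Hcu _ _ _)) // sdeg_mulr; apply: sdeg_eq => k.
by rewrite /ep mulrA [_ * eps _]mulrC.
Qed.

Lemma conv_epr (f : functional H) : conv f ep = f.
Proof.
apply: functional_extensionality; apply: hB_ind => n i.
case: HH => _ [_ _ _ Hcu _].
rewrite /conv big_ord_recr big1 ?add0r; last first.
  move=> p _; apply: big1 => j _; apply: big1 => k _.
  by rewrite /ep /eps /= subn_eq0 leqNgt ltn_ord !mulr0.
rewrite /= subnn add0r; apply: etrans (sdeg_delta' i f); apply: sdeg_eq => j.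
rewrite -(proj2 (Hcu _ _ _)) // sdeg_mulr; apply: sdeg_eq => k.
rewrite /ep; ring.
Qed.

Lemma sdeg_sum n m (G : hB H -> 'I_m -> K) :
  sdeg n (fun f => \sum_(p < m) G f p) = \sum_(p < m) sdeg n (fun f => G f p).
Proof. exact: exchange_big. Qed.

Lemma conv_inv_r (psi : functional H) : character psi -> conv psi (cinv psi) = ep.
Proof.
case=> psi1 psiM.
apply: functional_extensionality; apply: hB_ind => n i.
case: HH => H0 [_ _ _ _ [_ _ _ Hanti]].
rewrite /conv /cinv /=.
transitivity (sdeg n (fun f => psi f * (eps (bas i) * (f == @Defs.one K H)%:R))); last first.
  rewrite /ep /eps /=; case: n i => [|m] i /=.
    rewrite /Defs.one -/(bas (hone H)) (sdeg_eq (G := fun f => (f == bas (hone H))%:R * psi f)).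
      by rewrite sdeg_delta'.
    by move=> j; rewrite mul1r mulrC.
  by rewrite (sdeg_eq (G := fun _ => 0)) ?sdeg0 // => j; rewrite mul0r mulr0.
rewrite (sdeg_eq (G := fun f => psi f * \sum_(p < n.+1) sdeg p (fun a => sdeg (n - p) (fun b =>
           comul (bas i) a b * sdeg (n - p) (fun b' => anti b b' * Defs.mul a b' f))))); last first.
  by move=> j; rewrite -(Hanti (bas i) (bas j)).
rewrite (sdeg_eq (G := fun f => \sum_(p < n.+1) psi f * sdeg p (fun a => sdeg (n - p) (fun b =>
           comul (bas i) a b * sdeg (n - p) (fun b' => anti b b' * Defs.mul a b' f))))); last first.
  by move=> j; rewrite mulr_sumr.
rewrite sdeg_sum; apply: eq_bigr => p _.
have hp : (p + (n - p) = n)%N by rewrite subnKC // -ltnS.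
rewrite [RHS](sdeg_eq (G := fun f => sdeg p (fun a => sdeg (n - p) (fun b => sdeg (n - p) (fun b' =>
    psi f * comul (bas i) a b * anti b b' * Defs.mul a b' f))))); last first.
  move=> j; rewrite sdeg_mull; apply: sdeg_eq => a; rewrite sdeg_mull; apply: sdeg_eq => b.
  rewrite mulrA sdeg_mull; apply: sdeg_eq => b'; ring.
rewrite [RHS]sdeg_exch; apply: sdeg_eq => a; rewrite [RHS]sdeg_exch; apply: sdeg_eq => b.
rewrite [RHS]sdeg_exch mulrA sdeg_mull; apply: sdeg_eq => b'.
transitivity (comul (bas i) (bas a) (bas b) * anti (bas b) (bas b') * (psi (bas a) * psi (bas b'))).
  by ring.
have := psiM (bas a) (bas b'); rewrite /= hp => <-.
rewrite sdeg_mull; apply: sdeg_eq => f; ring.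
Qed.

Lemma conv_inv_l (psi : functional H) : character psi -> conv (cinv psi) psi = ep.
Proof.
case=> psi1 psiM.
apply: functional_extensionality; apply: hB_ind => n i.
case: HH => H0 [_ _ _ _ [_ _ Hanti _]].
rewrite /conv /cinv /=.
transitivity (sdeg n (fun f => psi f * (eps (bas i) * (f == @Defs.one K H)%:R))); last first.
  rewrite /ep /eps /=; case: n i => [|m] i /=.
    rewrite /Defs.one -/(bas (hone H)) (sdeg_eq (G := fun f => (f == bas (hone H))%:R * psi f)).
      by rewrite sdeg_delta'.
    by move=> j; rewrite mul1r mulrC.
  by rewrite (sdeg_eq (G := fun _ => 0)) ?sdeg0 // => j; rewrite mul0r mulr0.
rewrite [RHS](sdeg_eq (G := fun f => psi f * \sum_(p < n.+1) sdeg p (fun a => sdeg (n - p) (fun b =>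
           comul (bas i) a b * sdeg p (fun a' => anti a a' * Defs.mul a' b f))))); last first.
  by move=> j; rewrite -(Hanti (bas i) (bas j)).
rewrite [RHS](sdeg_eq (G := fun f => \sum_(p < n.+1) psi f * sdeg p (fun a => sdeg (n - p) (fun b =>
           comul (bas i) a b * sdeg p (fun a' => anti a a' * Defs.mul a' b f))))); last first.
  by move=> j; rewrite mulr_sumr.
rewrite sdeg_sum; apply: eq_bigr => p _.
have hp : (p + (n - p) = n)%N by rewrite subnKC // -ltnS.
rewrite [RHS](sdeg_eq (G := fun f => sdeg p (fun a => sdeg (n - p) (fun b => sdeg p (fun a' =>
    psi f * comul (bas i) a b * anti a a' * Defs.mul a' b f))))); last first.
  move=> j; rewrite sdeg_mull; apply: sdeg_eq => a; rewrite sdeg_mull; apply: sdeg_eq => b.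
  rewrite mulrA sdeg_mull; apply: sdeg_eq => b'; ring.
rewrite [RHS]sdeg_exch; apply: sdeg_eq => a; rewrite [RHS]sdeg_exch; apply: sdeg_eq => b.
rewrite [RHS]sdeg_exch sdeg_mulr sdeg_mull; apply: sdeg_eq => a'.
transitivity (comul (bas i) (bas a) (bas b) * anti (bas a) (bas a') * (psi (bas a') * psi (bas b))).
  by ring.
have := psiM (bas a') (bas b); rewrite /= hp => <-.
rewrite sdeg_mull; apply: sdeg_eq => f; ring.
Qed.

Definition T2 (f g : functional H) (e : hB H) q r :=
  sdeg q (fun a => sdeg r (fun b => comul e a b * (f a * g b))).

Lemma conv_ext (f g : functional H) n (i : 'I_(hdim H n)) N : (n <= N)%N ->
  conv f g (bas i) = \sum_(q < N.+1) \sum_(r < N.+1) ((q + r)%N == n)%:R * T2 f g (bas i) q r.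
Proof.
move=> nN.
transitivity (\sum_(q < N.+1) (q <= n)%:R * T2 f g (bas i) q (n - q)%N); last first.
  apply: eq_bigr => q _.
  rewrite (eq_bigr (fun r : 'I_N.+1 => (r == (n - q)%N :> nat)%:R * ((q <= n)%:R * T2 f g (bas i) q r))).
    by rewrite (sum_pick _ (fun r => (q <= n)%:R * T2 f g (bas i) q r)); case: ifP => // h; exfalso; move: h; lia.
  move=> r _; rewrite mulrA -natrM; congr (_%:R * _).
  by case: eqP; case: eqP; case: leqP => //; lia.
rewrite /conv /= (big_ord_widen N.+1 (fun q => T2 f g (bas i) q (n - q)%N)) // big_mkcond.
by apply: eq_bigr => q _; rewrite ltnS; case: leqP => _; rewrite ?mul1r ?mul0r.
Qed.

Lemma perm4 p s q r (F : hB H -> hB H -> hB H -> hB H -> K) :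
 sdeg p (fun x => sdeg s (fun c => sdeg q (fun a => sdeg r (fun b => F x c a b)))) =
 sdeg q (fun a => sdeg r (fun b => sdeg s (fun c => sdeg p (fun x => F x c a b)))).
Proof.
rewrite /sdeg exchange_big /=.
under eq_bigr => k _ do rewrite exchange_big.
under eq_bigr => k _ do under eq_bigr => l _ do rewrite exchange_big.
rewrite exchange_big.
by under eq_bigr => l _ do rewrite exchange_big.
Qed.

Lemma perm4' q t r s (F : hB H -> hB H -> hB H -> hB H -> K) :
 sdeg q (fun a => sdeg t (fun y => sdeg r (fun b => sdeg s (fun c => F a y b c)))) =
 sdeg q (fun a => sdeg r (fun b => sdeg s (fun c => sdeg t (fun y => F a y b c)))).
Proof.
apply: sdeg_eq => j; rewrite /sdeg exchange_big /=.
by under eq_bigr => k _ do rewrite exchange_big.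
Qed.

Lemma sdeg_sum2 p s m (G : hB H -> hB H -> 'I_m -> 'I_m -> K) :
  sdeg p (fun x => sdeg s (fun c => \sum_(q < m) \sum_(r < m) G x c q r)) =
  \sum_(q < m) \sum_(r < m) sdeg p (fun x => sdeg s (fun c => G x c q r)).
Proof.
rewrite /sdeg.
under eq_bigr => x _ do rewrite exchange_big.
under eq_bigr => x _ do under eq_bigr => q _ do rewrite exchange_big.
rewrite exchange_big; by under eq_bigr => q _ do rewrite exchange_big.
Qed.

Lemma key4 (c0 : K) p s q r (X : hB H -> hB H -> hB H -> hB H -> K) :
  sdeg p (fun x => sdeg s (fun c => c0 * sdeg q (fun a => sdeg r (fun b => X x c a b)))) =
  c0 * sdeg q (fun a => sdeg r (fun b => sdeg s (fun c => sdeg p (fun x => X x c a b)))).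
Proof.
rewrite -perm4 sdeg_mull; apply: sdeg_eq => x; by rewrite sdeg_mull.
Qed.

Lemma key4' (c0 : K) q t r s (X : hB H -> hB H -> hB H -> hB H -> K) :
  sdeg q (fun a => sdeg t (fun y => c0 * sdeg r (fun b => sdeg s (fun c => X a y b c)))) =
  c0 * sdeg q (fun a => sdeg r (fun b => sdeg s (fun c => sdeg t (fun y => X a y b c)))).
Proof.
rewrite -perm4' sdeg_mull; apply: sdeg_eq => x; by rewrite sdeg_mull.
Qed.

Lemma conv_assoc (f g h : functional H) : conv (conv f g) h = conv f (conv g h).
Proof.
apply: functional_extensionality; apply: hB_ind => n i.
case: HH => _ [_ _ Hcoas _ _].
set e := bas i.
pose W q r s := sdeg q (fun a => sdeg r (fun b => sdeg s (fun c => f a * g b * h c))).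
pose V p q r s := sdeg q (fun a => sdeg r (fun b => sdeg s (fun c =>
   f a * g b * h c * sdeg p (fun x => comul e x c * comul x a b)))).
pose V' q t r s := sdeg q (fun a => sdeg r (fun b => sdeg s (fun c =>
   f a * g b * h c * sdeg t (fun y => comul e a y * comul y b c)))).
have stepL : forall p s : 'I_n.+1, T2 (conv f g) h e p s =
   \sum_(q < n.+1) \sum_(r < n.+1) ((q + r)%N == p)%:R * V p q r s.
  move=> p s; have hp : (p <= n)%N by rewrite -ltnS.
  rewrite /T2.
  transitivity (sdeg p (fun x => sdeg s (fun c => \sum_(q < n.+1) \sum_(r < n.+1)
     ((q + r)%N == p)%:R * sdeg q (fun a => sdeg r (fun b =>
        comul e x c * comul x a b * (f a * g b * h c)))))).
    apply: sdeg_eq => j; apply: sdeg_eq => k.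
    rewrite (conv_ext f g j hp) mulr_suml mulr_sumr; apply: eq_bigr => q _.
    rewrite mulr_suml mulr_sumr; apply: eq_bigr => r _.
    transitivity (((q + r)%N == p)%:R * (comul e (bas j) (bas k) * h (bas k) * T2 f g (bas j) q r)).
      by ring.
    congr (_ * _); rewrite /T2 sdeg_mull; apply: sdeg_eq => a; rewrite sdeg_mull.
    by apply: sdeg_eq => b; ring.
  rewrite sdeg_sum2; apply: eq_bigr => q _; apply: eq_bigr => r _.
  rewrite key4 /V; congr (_ * _).
  apply: sdeg_eq => a; apply: sdeg_eq => b; apply: sdeg_eq => c.
  rewrite sdeg_mull; apply: sdeg_eq => x; ring.
have stepR : forall q t : 'I_n.+1, T2 f (conv g h) e q t =
   \sum_(r < n.+1) \sum_(s < n.+1) ((r + s)%N == t)%:R * V' q t r s.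
  move=> q t; have ht : (t <= n)%N by rewrite -ltnS.
  rewrite /T2.
  transitivity (sdeg q (fun a => sdeg t (fun y => \sum_(r < n.+1) \sum_(s < n.+1)
     ((r + s)%N == t)%:R * sdeg r (fun b => sdeg s (fun c =>
        comul e a y * comul y b c * (f a * g b * h c)))))).
    apply: sdeg_eq => j; apply: sdeg_eq => k.
    rewrite (conv_ext g h k ht) mulr_sumr mulr_sumr; apply: eq_bigr => r _.
    rewrite mulr_sumr mulr_sumr; apply: eq_bigr => s _.
    transitivity (((r + s)%N == t)%:R * (comul e (bas j) (bas k) * f (bas j) * T2 g h (bas k) r s)).
      by ring.
    congr (_ * _); rewrite /T2 sdeg_mull; apply: sdeg_eq => b; rewrite sdeg_mull.
    by apply: sdeg_eq => c; ring.
  rewrite sdeg_sum2; apply: eq_bigr => r _; apply: eq_bigr => s _.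
  rewrite key4' /V'; congr (_ * _).
  apply: sdeg_eq => a; apply: sdeg_eq => b; apply: sdeg_eq => c.
  rewrite sdeg_mull; apply: sdeg_eq => x; ring.
rewrite (conv_ext (conv f g) h i (leqnn n)) (conv_ext f (conv g h) i (leqnn n)).
under eq_bigr => p _ do under eq_bigr => s _ do rewrite stepL.
under [RHS]eq_bigr => q _ do under eq_bigr => t _ do rewrite stepR.
rewrite (@idx1 K n V) (@idx2 K n V').
apply: eq_bigr => q _; apply: eq_bigr => r _; apply: eq_bigr => s _.
case: eqP => hqrs; last by rewrite !mul0r.
congr (_ * _); apply: sdeg_eq => a; apply: sdeg_eq => b; apply: sdeg_eq => c.
congr (_ * _); exact: (Hcoas e (bas a) (bas b) (bas c) hqrs).
Qed.

Definition Q p q (M : 'M[K]_(hdim H p, hdim H q)) (f g : functional H) :=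
  \sum_(i < hdim H p) \sum_(j < hdim H q) M i j * (f (bas i) * g (bas j)).

Lemma fval_conv_mx (f g : functional H) n (v : 'rV[K]_(hdim H n)) :
  fval (conv f g) v = \sum_(p < n.+1) Q (comulmx p v) f g.
Proof.
rewrite /fval /conv /Q /=.
transitivity (\sum_(k < hdim H n) \sum_(p < n.+1) \sum_(i < hdim H p) \sum_(j < hdim H (n - p))
   v 0 k * comul (bas k) (bas i) (bas j) * (f (bas i) * g (bas j))).
  apply: eq_bigr => k _; rewrite mulr_sumr; apply: eq_bigr => p _.
  rewrite /sdeg mulr_sumr; apply: eq_bigr => i _; rewrite mulr_sumr; apply: eq_bigr => j _.
  by rewrite mulrA.
rewrite exchange_big; apply: eq_bigr => p _.
rewrite exchange_big; apply: eq_bigr => i _.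
rewrite exchange_big; apply: eq_bigr => j _.
by rewrite mxE mulr_suml.
Qed.

Lemma Q_tensor p q r (X : 'M[K]_(r, hdim H p)) (Y : 'M[K]_(r, hdim H q)) f g :
  Q (X^T *m Y) f g = \sum_(k < r) fval f (row k X) * fval g (row k Y).
Proof.
rewrite /Q /fval.
transitivity (\sum_(k < r) \sum_(i < hdim H p) \sum_(j < hdim H q)
   X k i * Y k j * (f (bas i) * g (bas j))); last first.
  apply: eq_bigr => k _; rewrite mulr_suml; apply: eq_bigr => i _.
  rewrite mulr_sumr; apply: eq_bigr => j _; rewrite !mxE; ring.
rewrite [RHS]exchange_big; apply: eq_bigr => i _; rewrite [RHS]exchange_big; apply: eq_bigr => j _.
rewrite mxE mulr_suml; apply: eq_bigr => k _; by rewrite mxE.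
Qed.

Definition agreeC (C : gsubspace H) (f g : functional H) :=
  forall m (v : 'rV[K]_(hdim H m)), v \in C m -> fval f v = fval g v.

Lemma agree_conv (C : gsubspace H) f f' g g' : graded_subcoalgebra C ->
  agreeC C f f' -> agreeC C g g' -> agreeC C (conv f g) (conv f' g').
Proof.
move=> hC hf hg n v vC; rewrite !fval_conv_mx; apply: eq_bigr => p _.
have [r [X [Y [hX hY ->]]]] := hC n v vC p (ltn_ord p : (p <= n)%N).
rewrite !Q_tensor; apply: eq_bigr => k _.
by rewrite hf ?hX // hg ?hY.
Qed.

Lemma agree_refl C f : agreeC C f f.
Proof. by []. Qed.

Lemma agree_trans C f g h : agreeC C f g -> agreeC C g h -> agreeC C f h.
Proof. by move=> a b m v vC; rewrite a ?b. Qed.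

Lemma agree_sym C f g : agreeC C f g -> agreeC C g f.
Proof. by move=> a m v vC; rewrite a. Qed.

Lemma agree_case1 (phi psi phi' psi' : functional H) :
  character psi -> character psi' ->
  (forall e, conv (cinv psi) phi e = conv (cinv psi') phi' e) ->
  forall C, graded_subcoalgebra C -> agreeC C phi psi -> agreeC C phi' psi'.
Proof.
move=> Hpsi Hpsi' Hyp C hC hpp.
have hchi : agreeC C (conv (cinv psi) phi) ep.
  rewrite -(conv_inv_l Hpsi); exact: agree_conv hC (@agree_refl C _) hpp.
have e1 : phi' = conv psi' (conv (cinv psi) phi).
  have -> : conv (cinv psi) phi = conv (cinv psi') phi' by apply: functional_extensionality.
  by rewrite -conv_assoc conv_inv_r // conv_epl.
rewrite e1; apply: (agree_trans (g := conv psi' ep)).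
  exact: agree_conv hC (@agree_refl C _) hchi.
by rewrite conv_epr.
Qed.

Lemma agree_case2 (phi psi phi' psi' : functional H) :
  character psi -> character psi' ->
  (forall e, conv phi (cinv psi) e = conv phi' (cinv psi') e) ->
  forall C, graded_subcoalgebra C -> agreeC C phi psi -> agreeC C phi' psi'.
Proof.
move=> Hpsi Hpsi' Hyp C hC hpp.
have hchi : agreeC C (conv phi (cinv psi)) ep.
  rewrite -(conv_inv_r Hpsi); exact: agree_conv hC hpp (@agree_refl C _).
have e1 : phi' = conv (conv phi (cinv psi)) psi'.
  have -> : conv phi (cinv psi) = conv phi' (cinv psi') by apply: functional_extensionality.
  by rewrite conv_assoc conv_inv_l // conv_epr.
rewrite e1; apply: (agree_trans (g := conv ep psi')).
  exact: agree_conv hC hchi (@agree_refl C _).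
by rewrite conv_epl.
Qed.

Lemma conv_subr (f g h : functional H) e :
  conv f (fun b => g b - h b) e = conv f g e - conv f h e.
Proof.
rewrite /conv -sumrB; apply: eq_bigr => p _; rewrite /sdeg -sumrB; apply: eq_bigr => i _.
rewrite -sumrB; apply: eq_bigr => j _; ring.
Qed.

Lemma conv_subl (f g h : functional H) e :
  conv (fun b => f b - g b) h e = conv f h e - conv g h e.
Proof.
rewrite /conv -sumrB; apply: eq_bigr => p _; rewrite /sdeg -sumrB; apply: eq_bigr => i _.
rewrite -sumrB; apply: eq_bigr => j _; ring.
Qed.

Lemma restr_conv (f g : functional H) m e :
  restr m (conv f g) e = \sum_(p < m.+1) conv (restr p f) (restr (m - p) g) e.
Proof.
move: e; apply: hB_ind => n i; rewrite /restr /=.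
case: eqP => [<-|nm].
  rewrite /conv /= exchange_big; apply: eq_bigr => p' _.
  rewrite (bigD1 p') //= big1 ?addr0.
    apply: sdeg_eq => j; apply: sdeg_eq => k; by rewrite /= !eqxx.
  move=> p /negbTE hp; apply: big1 => j _; apply: big1 => k _.
  rewrite /=; case: eqP => [e'|_]; last by rewrite mul0r mulr0.
  by move/negbT/eqP: hp => hp; exfalso; apply: hp; apply: val_inj; exact: esym e'.
apply/esym/big1 => p _; rewrite /conv; apply: big1 => p' _.
apply: big1 => j _; apply: big1 => k _; rewrite /=.
case: eqP => [e1|]; case: eqP => [e2|]; rewrite ?mul0r ?mulr0 //.
exfalso; apply: nm; move: e1 e2 (ltn_ord p) (ltn_ord p'); rewrite /=; lia.
Qed.

Lemma J_sum (J : functional H -> Prop) : is_ideal J ->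
  forall m (F : 'I_m -> functional H), (forall k, J (F k)) ->
  J (fun b => \sum_(k < m) F k b).
Proof.
case=> _ J0 JD _ _; elim=> [|m IH] F hF.
  have -> : (fun b => \sum_(k < 0) F k b) = (fun _ => 0) by apply: functional_extensionality => b; rewrite big_ord0.
  exact: J0.
have -> : (fun b => \sum_(k < m.+1) F k b) =
   (fun b => (fun b => \sum_(k < m) F (widen_ord (leqnSn m) k) b) b + F ord_max b).
  by apply: functional_extensionality => b; rewrite big_ord_recr.
by apply: JD => //; apply: IH.
Qed.

Lemma restr_dual p (f : functional H) : in_graded_dual (restr p f).
Proof. by exists p.+1 => b hb; rewrite /restr; case: eqP => // e; move: hb; rewrite e ltnn. Qed.

Lemma ideal_case1 (phi psi phi' psi' : functional H) :
  character psi -> character psi' ->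
  (forall e, conv (cinv psi) phi e = conv (cinv psi') phi' e) ->
  forall J, is_ideal J -> (forall n, J (fun b => restr n phi b - restr n psi b)) ->
  forall n, J (fun b => restr n phi' b - restr n psi' b).
Proof.
move=> Hpsi Hpsi' Hyp J hJ hphi n.
have hJ' := hJ; case: hJ' => _ _ _ _ Jmul.
set chi := conv (cinv psi) phi.
have hD : forall m, J (fun b => restr m chi b - restr m ep b).
  move=> m.
  have -> : (fun b => restr m chi b - restr m ep b) = (fun b => \sum_(p < m.+1)
       conv (restr p (cinv psi)) (fun b => restr (m - p) phi b - restr (m - p) psi b) b).
    apply: functional_extensionality => b.
    rewrite -(conv_inv_l Hpsi) /chi !restr_conv -sumrB; apply: eq_bigr => p _.
    by rewrite conv_subr.
  apply: J_sum => // p; exact: (proj1 (Jmul _ _ (restr_dual _ _) (hphi _))).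
have e1 : phi' = conv psi' chi.
  have -> : chi = conv (cinv psi') phi' by apply: functional_extensionality.
  by rewrite -conv_assoc conv_inv_r // conv_epl.
have -> : (fun b => restr n phi' b - restr n psi' b) = (fun b => \sum_(p < n.+1)
     conv (restr p psi') (fun b => restr (n - p) chi b - restr (n - p) ep b) b).
  apply: functional_extensionality => b.
  rewrite {1}e1 -{2}(conv_epr psi') !restr_conv -sumrB; apply: eq_bigr => p _.
  by rewrite conv_subr.
apply: J_sum => // p; exact: (proj1 (Jmul _ _ (restr_dual _ _) (hD _))).
Qed.

Lemma ideal_case2 (phi psi phi' psi' : functional H) :
  character psi -> character psi' ->
  (forall e, conv phi (cinv psi) e = conv phi' (cinv psi') e) ->
  forall J, is_ideal J -> (forall n, J (fun b => restr n phi b - restr n psi b)) ->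
  forall n, J (fun b => restr n phi' b - restr n psi' b).
Proof.
move=> Hpsi Hpsi' Hyp J hJ hphi n.
have hJ' := hJ; case: hJ' => _ _ _ _ Jmul.
set chi := conv phi (cinv psi).
have hD : forall m, J (fun b => restr m chi b - restr m ep b).
  move=> m.
  have -> : (fun b => restr m chi b - restr m ep b) = (fun b => \sum_(p < m.+1)
       conv (fun b => restr p phi b - restr p psi b) (restr (m - p) (cinv psi)) b).
    apply: functional_extensionality => b.
    rewrite -(conv_inv_r Hpsi) /chi !restr_conv -sumrB; apply: eq_bigr => p _.
    by rewrite conv_subl.
  apply: J_sum => // p; exact: (proj2 (Jmul _ _ (restr_dual _ _) (hphi _))).
have e1 : phi' = conv chi psi'.
  have -> : chi = conv phi' (cinv psi') by apply: functional_extensionality.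
  by rewrite conv_assoc conv_inv_l // conv_epr.
have -> : (fun b => restr n phi' b - restr n psi' b) = (fun b => \sum_(p < n.+1)
     conv (fun b => restr p chi b - restr p ep b) (restr (n - p) psi') b).
  apply: functional_extensionality => b.
  rewrite {1}e1 -{2}(conv_epl psi') !restr_conv -sumrB; apply: eq_bigr => p _.
  by rewrite conv_subl.
apply: J_sum => // p; exact: (proj2 (Jmul _ _ (restr_dual _ _) (hD _))).
Qed.

Definition gsum (C1 C2 : gsubspace H) : gsubspace H := fun n => (C1 n + C2 n)%VS.
Definition gzero : gsubspace H := fun n => 0%VS.

Lemma comulmxD n p (v1 v2 : 'rV[K]_(hdim H n)) :
  comulmx p (v1 + v2) = comulmx p v1 + comulmx p v2.
Proof.
apply/matrixP => i j; rewrite !mxE -big_split; apply: eq_bigr => k _.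
by rewrite mxE mulrDl.
Qed.

Lemma fvalD (f : functional H) n (v1 v2 : 'rV[K]_(hdim H n)) :
  fval f (v1 + v2) = fval f v1 + fval f v2.
Proof.
by rewrite /fval -big_split; apply: eq_bigr => k _; rewrite mxE mulrDl.
Qed.

Lemma gsc_sum C1 C2 : graded_subcoalgebra C1 -> graded_subcoalgebra C2 ->
  graded_subcoalgebra (gsum C1 C2).
Proof.
move=> h1 h2 n v /memv_addP [v1 hv1 [v2 hv2 ->]] p hp.
have [r1 [X1 [Y1 [hX1 hY1 e1]]]] := h1 n v1 hv1 p hp.
have [r2 [X2 [Y2 [hX2 hY2 e2]]]] := h2 n v2 hv2 p hp.
exists (r1 + r2)%N, (col_mx X1 X2), (col_mx Y1 Y2); split.
- move=> k; case: (splitP k) => [k1 e|k2 e].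
    have -> : k = lshift r2 k1 by apply: val_inj.
    by rewrite rowKu; apply: (subvP (addvSl _ _)); auto.
  have -> : k = rshift r1 k2 by apply: val_inj.
  by rewrite rowKd; apply: (subvP (addvSr _ _)); auto.
- move=> k; case: (splitP k) => [k1 e|k2 e].
    have -> : k = lshift r2 k1 by apply: val_inj.
    by rewrite rowKu; apply: (subvP (addvSl _ _)); auto.
  have -> : k = rshift r1 k2 by apply: val_inj.
  by rewrite rowKd; apply: (subvP (addvSr _ _)); auto.
by rewrite comulmxD e1 e2 tr_col_mx mul_row_col.
Qed.

Lemma agree_sum C1 C2 f g : agreeC C1 f g -> agreeC C2 f g -> agreeC (gsum C1 C2) f g.
Proof.
move=> h1 h2 n v /memv_addP [v1 hv1 [v2 hv2 ->]].
by rewrite !fvalD h1 ?h2.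
Qed.

Lemma gsc_zero : graded_subcoalgebra gzero.
Proof.
move=> n v; rewrite memv0 => /eqP -> p hp.
exists 0%N, 0, 0; split => [k|k|]; first by rewrite row0 mem0v.
  by rewrite row0 mem0v.
rewrite trmx0 mul0mx; apply/matrixP => i j; rewrite !mxE big1 // => k _.
by rewrite mxE mul0r.
Qed.

Lemma agree_zero f g : agreeC gzero f g.
Proof.
move=> n v; rewrite memv0 => /eqP ->.
by rewrite /fval !big1 // => k _; rewrite mxE mul0r.
Qed.

Lemma dim_lt_sum m (U V : {vspace 'rV[K]_m}) : ~~ (V <= U)%VS -> (\dim U < \dim (U + V))%N.
Proof.
move=> nVU; rewrite ltn_neqAle dimvS ?addvSl // andbT.
apply/negP => /eqP hd; move/negP: nVU; apply.
have : U == (U + V)%VS by rewrite eqEdim addvSl hd leqnn.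
by move/eqP => e; rewrite [X in (_ <= X)%VS]e; apply: addvSr.
Qed.

Lemma dim_le m (U : {vspace 'rV[K]_m}) : (\dim U <= m)%N.
Proof.
have := dimvS (subvf U); rewrite dimvf /dim /= mul1n //.
Qed.

Lemma max_exists (P : gsubspace H -> Prop) :
  (forall C1 C2, P C1 -> P C2 -> P (gsum C1 C2)) -> P gzero ->
  forall n, exists Cm, P Cm /\ forall C', P C' -> (C' n <= Cm n)%VS.
Proof.
move=> Psum P0 n.
suff : forall k C, P C -> (hdim H n - \dim (C n) <= k)%N ->
   exists Cm, P Cm /\ forall C', P C' -> (C' n <= Cm n)%VS.
  by move/(_ (hdim H n) gzero P0); apply; apply: leq_subr.
elim=> [|k IH] C hC hk;
  (case: (classic (forall C', P C' -> (C' n <= C n)%VS)) => [hall|hnot]; first by exists C).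
- exfalso; apply: hnot => C' hC'; apply/negPn/negP => hn.
  have := dim_lt_sum hn; have := dim_le (C n + C' n)%VS; move: hk; lia.
- have [C' hC'] : exists C', ~ (P C' -> (C' n <= C n)%VS).
    by apply: not_all_ex_not.
  have [pC' hn] : P C' /\ ~~ (C' n <= C n)%VS.
    by split; [apply: NNPP => h; apply: hC' => /h | apply/negP => h; apply: hC'].
  apply: (IH (gsum C C')); first exact: Psum.
  have := dim_lt_sum hn; have := dim_le (C n + C' n)%VS; move: hk; rewrite /gsum; lia.
Qed.

End Basic.

Theorem proposition5p5 (K : fieldType) (H : gcHopf K) (HH : gcHopf_axioms H)
  (phi phi' psi psi' : functional H)
  (Hphi : character phi) (Hphi' : character phi')
  (Hpsi : character psi) (Hpsi' : character psi')
  (Hyp : (forall e, conv (cinv psi) phi e = conv (cinv psi') phi' e) \/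
         (forall e, conv phi (cinv psi) e = conv phi' (cinv psi') e)) :
  (exists C, is_S phi psi C /\ is_S phi' psi' C) /\
  (forall f, in_I phi psi f <-> in_I phi' psi' f).
Proof.
have HPeq : forall C, agree_on phi psi C <-> agree_on phi' psi' C.
  move=> C; split => -[hC ha]; split => //.
    case: Hyp => h; [exact: (agree_case1 HH Hpsi Hpsi' h hC ha)
                    |exact: (agree_case2 HH Hpsi Hpsi' h hC ha)].
  case: Hyp => h.
    exact: (agree_case1 HH Hpsi' Hpsi (fun e => esym (h e)) hC ha).
  exact: (agree_case2 HH Hpsi' Hpsi (fun e => esym (h e)) hC ha).
split.
  have Psum : forall C1 C2, agree_on phi psi C1 -> agree_on phi psi C2 ->
      agree_on phi psi (gsum C1 C2).
    move=> C1 C2 [h1 a1] [h2 a2]; split; first exact: gsc_sum.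
    exact: agree_sum.
  have P0 : agree_on phi psi (gzero H) by split; [exact: gsc_zero | exact: agree_zero].
  have hex := max_exists Psum P0.
  pose F n := proj1_sig (constructive_indefinite_description _ (hex n)).
  have hF : forall n, agree_on phi psi (F n) /\
      forall C', agree_on phi psi C' -> (C' n <= F n n)%VS.
    by move=> n; exact: (proj2_sig (constructive_indefinite_description _ (hex n))).
  pose C : gsubspace H := fun n => F n n.
  have hCS : is_S phi psi C.
    split; last by move=> C' hC' n; exact: (proj2 (hF n) C' hC').
    split.
      move=> n v vC p hp.
      have [[gF _] _] := hF n.
      have [r [X [Y [hX hY e]]]] := gF n v vC p hp.
      exists r, X, Y; split => // k.
        exact: (subvP (proj2 (hF p) _ (proj1 (hF n)))).
      exact: (subvP (proj2 (hF (n - p)%N) _ (proj1 (hF n)))).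
    move=> n v vC; exact: (proj2 (proj1 (hF n)) n v vC).
  exists C; split => //; split; first exact/HPeq/(proj1 hCS).
  by move=> C' hC' n; apply: (proj2 hCS); apply/HPeq.
move=> f; split => hI J hJ hgen; apply: hI => //.
  case: Hyp => h.
    exact: (ideal_case1 HH Hpsi' Hpsi (fun e => esym (h e)) hJ hgen).
  exact: (ideal_case2 HH Hpsi' Hpsi (fun e => esym (h e)) hJ hgen).
case: Hyp => h.
  exact: (ideal_case1 HH Hpsi Hpsi' h hJ hgen).
exact: (ideal_case2 HH Hpsi Hpsi' h hJ hgen).
Qed.
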